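(* Let $1\le k<n$, let $C=[c_{ij}]$ be an $n\times n$ pairwise comparison matrix (all entries positive, $c_{ij}=1/c_{ji}$, $c_{ii}=1$), and let $C_k$ be its upper-left $k\times k$ submatrix. Let $A_k=I_k-\frac{1}{n-1}(C_k-I_k)$, i.e. $A_k$ has entries $1$ on the diagonal and $-\frac{1}{n-1}c_{ij}$ off the diagonal ($1\le i\ne j\le k$). If $k=1$, or if $1<k<n$ and $\mathit{CI}(C_k)<\frac{n-k}{k-1}$, then $A_k$ is invertible; consequently, for any positive reference weights $w(a_{k+1}),\dots,w(a_n)$, the arithmetic HRE system $A_k w=b$, where $w=(w(a_1),\dots,w(a_k))^T$ and $b_i=\frac{1}{n-1}\sum_{j=k+1}^n c_{ij}w(a_j)$ for $i=1,\dots,k$, has a unique solution.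
   Context: Alternatives $a_1,\dots,a_n$; $a_1,\dots,a_k$ have unknown weights and $a_{k+1},\dots,a_n$ are reference alternatives with known positive weights $w(a_{k+1}),\dots,w(a_n)$. For a $k\times k$ pairwise comparison matrix $M$ with $k\ge 2$, Saaty's consistency index is $\mathit{CI}(M)=\frac{\rho(M)-k}{k-1}$, where $\rho(M)$ is the spectral radius of $M$ (which, for a positive matrix, is its Perron eigenvalue). *)

(* Defs.v *)
From HB Require Import structures.
From mathcomp Require Import all_boot all_order all_algebra.
From mathcomp Require Import complex.
Set Implicit Arguments. Unset Strict Implicit. Unset Printing Implicit Defensive.
Import Order.TTheory GRing.Theory Num.Theory.
Local Open Scope ring_scope.

Definition is_PCM (R : rcfType) (n : nat) (C : 'M[R]_n) : Prop :=
  (forall i j, 0 < C i j) /\ (forall i j, C i j = (C j i)^-1) /\ (forall i, C i i = 1).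

(* The (complex) eigenvalues of a real square matrix, listed with
   multiplicity: the roots of its characteristic polynomial over R[i]. *)
Definition eigenvalues (R : rcfType) (k : nat) (M : 'M[R]_k) : seq R[i] :=
  proj1_sig (closed_field_poly_normal (char_poly (map_mx (real_complex R) M))).

Definition spectral_radius (R : rcfType) (k : nat) (M : 'M[R]_k) : R :=
  \big[Num.max/0]_(z <- eigenvalues M) ComplexField.Normc.normc z.

Definition CI (R : rcfType) (k : nat) (M : 'M[R]_k) : R :=
  (spectral_radius M - k%:R) / (k.-1)%:R.

Definition ulsub (R : Type) (n k : nat) (hk : (k <= n)%N) (C : 'M[R]_n) : 'M[R]_k :=
  \matrix_(i < k, j < k) C (widen_ord hk i) (widen_ord hk j).

Definition HRE_A (R : rcfType) (n k : nat) (hk : (k <= n)%N) (C : 'M[R]_n) : 'M[R]_k :=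
  1%:M - ((n.-1)%:R)^-1 *: (ulsub hk C - 1%:M).

(* b_i = 1/(n-1) * sum_{j = k+1..n} c_ij w(a_j)  (0-based: j >= k). *)
Definition HRE_b (R : rcfType) (n k : nat) (hk : (k <= n)%N) (C : 'M[R]_n)
  (wref : 'I_n -> R) : 'cV[R]_k :=
  \col_(i < k) (((n.-1)%:R)^-1 * \sum_(j < n | (k <= j)%N) C (widen_ord hk i) j * wref j).

(* Main.v *)
Require Import Defs.
From HB Require Import structures.
From mathcomp Require Import all_boot all_order all_algebra.
From mathcomp Require Import complex.
From mathcomp Require Import ring lra.
Import Order.TTheory GRing.Theory Num.Theory.
Local Open Scope ring_scope.

Lemma eig_le_rho (R : rcfType) (k : nat) (M : 'M[R]_k) (a : R) :
  ~~ ((M - a%:M) \in unitmx) -> `|a| <= spectral_radius M.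
Proof.
move=> nu.
have ev : eigenvalue M a by rewrite /eigenvalue /eigenspace kermx_eq0 row_free_unit.
have evc : eigenvalue (map_mx (real_complex R) M) (real_complex R a).
  by rewrite eigenvalue_map.
rewrite eigenvalue_root_char in evc.
rewrite /spectral_radius /eigenvalues.
case: closed_field_poly_normal => r /= hr.
move: evc; rewrite hr (monicP (char_poly_monic _)) scale1r root_prod_XsubC => ar.
have := @le_bigmax_seq _ _ _ r 0 _ xpredT (fun z => ComplexField.Normc.normc z) ar isT. rewrite /= /ComplexField.Normc.normc /= expr0n /= addr0 sqrtr_sqr //.
Qed.

Theorem mainTheorem1 (R : rcfType) (n k : nat) (hk1 : (1 <= k)%N) (hkn : (k < n)%N)
  (C : 'M[R]_n) (hC : is_PCM C) :
  (k = 1%N \/ ((1 < k)%N /\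
     CI (ulsub (ltnW hkn) C) < (n - k)%:R / (k.-1)%:R)) ->
  HRE_A (ltnW hkn) C \in unitmx /\
  (forall wref : 'I_n -> R, (forall j : 'I_n, (k <= j)%N -> 0 < wref j) ->
     exists! w : 'cV[R]_k, HRE_A (ltnW hkn) C *m w = HRE_b (ltnW hkn) C wref).
Proof.
move=> hyp.
have unitA : HRE_A (ltnW hkn) C \in unitmx.
  case: hyp => [k1|[k1 hci]].
    have -> : HRE_A (ltnW hkn) C = 1%:M.
      apply/matrixP => i j; rewrite !mxE.
      move: (ltnW hkn) i j; rewrite k1 => hk i j.
      rewrite !ord1 /= (proj2 (proj2 hC)).
      by rewrite subrr mulr0 subr0.
    exact: unitmx1.
  have n2 : (1 < n)%N by exact: (leq_ltn_trans hk1 hkn).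
  have nm : n.-1%:R != 0 :> R by rewrite pnatr_eq0 -lt0n -ltnS prednK // ltnW.
  have nS : n%:R = n.-1%:R + 1 :> R by rewrite natr1 prednK // ltnW.
  set M := ulsub (ltnW hkn) C.
  have -> : HRE_A (ltnW hkn) C = (- (n.-1%:R)^-1) *: (M - n%:R%:M).
    apply/matrixP => i j; rewrite !mxE -/M.
    case: (i == j) => /=; rewrite ?mulr1n ?mulr0n; last by ring.
    rewrite nS; field.
    exact: nm.
  rewrite unitmxZ; last by rewrite unitfE oppr_eq0 invr_eq0.
  apply: contraT => nu; have := @eig_le_rho _ _ M _ nu; rewrite normr_nat.
  move: hci; rewrite /CI -/M ltr_pM2r; last first.
    by rewrite invr_gt0 ltr0n -ltnS prednK // ltnW.
  rewrite natrB ?(ltnW hkn) // => h1 h2.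
  have : spectral_radius M < n%:R by lra.
  by rewrite ltNge h2.
split => // wref _.
exists (invmx (HRE_A (ltnW hkn) C) *m HRE_b (ltnW hkn) C wref); split.
  by rewrite mulKVmx.
by move=> w <-; rewrite mulKmx.
Qed.
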